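(* Let $k\ge1$ and let $X\in GL(2k,\mathbb F_2)$ be the permutation matrix of a product of disjoint transpositions of $[2k]$, each transposition exchanging an index in $\{1,\dots,k\}$ with an index in $\{k+1,\dots,2k\}$. Then $X$ is a product of matrices each of which is either an in-block factor $\mathrm{diag}(C_1,C_2)$ with $C_1,C_2\in GL(k,\mathbb F_2)$, or the codeblock exchange $\begin{pmatrix}0&I_k\\ I_k&0\end{pmatrix}$, or one of the transversal factors $\begin{pmatrix}I_k&I_k\\0&I_k\end{pmatrix}$, $\begin{pmatrix}I_k&0\\ I_k&I_k\end{pmatrix}$, with at most four transversal factors in total.
   Context: Setting: two codeblocks of a CSS code each encoding $k$ logical qubits; logical qubit $j$ of block $1$ has index $j$ and of block $2$ has index $k+j$. A logical CNOT/SWAP circuit is described by its action on $X$-type logical operators, a matrix in $GL(2k,\mathbb F_2)$, and composition is matrix multiplication. In-block factors and the codeblock exchange (relabelling of the two codeblocks) have zero physical cost; each transversal factor has physical depth one. *)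

(* Defs.v *)
From HB Require Import structures.
From mathcomp Require Import all_boot all_order all_algebra all_fingroup.
Set Implicit Arguments. Unset Strict Implicit. Unset Printing Implicit Defensive.
Import GRing.Theory.
Local Open Scope ring_scope.

(* Logical CNOT/SWAP circuits on two codeblocks of k logical qubits:
   matrices in GL(2k, F_2), indices 'I_(k+k); block 1 = first k indices. *)

Definition inblock (k : nat) (A : 'M['F_2]_(k + k)) : Prop :=
  exists C1 C2 : 'M['F_2]_k,
    [/\ C1 \in unitmx, C2 \in unitmx & A = block_mx C1 0 0 C2].

Definition exchange (k : nat) : 'M['F_2]_(k + k) := block_mx 0 1%:M 1%:M 0.

Definition transU (k : nat) : 'M['F_2]_(k + k) := block_mx 1%:M 1%:M 0 1%:M.
Definition transL (k : nat) : 'M['F_2]_(k + k) := block_mx 1%:M 0 1%:M 1%:M.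

Definition transversal_factor (k : nat) (A : 'M['F_2]_(k + k)) : bool :=
  (A == transU k) || (A == transL k).

Definition allowed_factor (k : nat) (A : 'M['F_2]_(k + k)) : Prop :=
  inblock A \/ A = exchange k \/ transversal_factor A.

Definition mxprod (k : nat) (fs : seq 'M['F_2]_(k + k)) : 'M['F_2]_(k + k) :=
  foldr (fun A B => A *m B) 1%:M fs.

(* s is a product of disjoint transpositions each exchanging an index of
   block 1 (i < k) with an index of block 2 (i >= k): an involution whose
   non-fixed points are moved across the two blocks. *)
Definition cross_involution (k : nat) (s : 'S_(k + k)) : Prop :=
  (forall i, s (s i) = i) /\
  (forall i, s i != i -> (i < k)%N != (s i < k)%N).

(* Main.v *)
Require Import Defs.
From HB Require Import structures.
From mathcomp Require Import all_boot all_order all_algebra all_fingroup.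
Set Implicit Arguments. Unset Strict Implicit. Unset Printing Implicit Defensive.
Import GRing.Theory.
Local Open Scope ring_scope.

Lemma addF2 m n (A : 'M['F_2]_(m, n)) : A + A = 0.
Proof. apply/matrixP => i j; rewrite !mxE -mulr2n -mulr_natr (@pchar_Fp_0 2) ?mulr0 //. Qed.

Lemma oppF2 m n (A : 'M['F_2]_(m, n)) : - A = A.
Proof. by rewrite -[LHS]add0r -(addF2 A) -addrA subrr addr0. Qed.

Section B.
Variable k : nat.
Local Notation M := ('M['F_2]_k).
Definition dg (A B : M) : 'M['F_2]_(k + k) := block_mx A 0 0 B.
Definition UP (N : M) : 'M['F_2]_(k + k) := block_mx 1%:M N 0 1%:M.
Definition LO (N : M) : 'M['F_2]_(k + k) := block_mx 1%:M 0 N 1%:M.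

Lemma conjU (A A' B B' N : M) : A *m A' = 1%:M -> B *m B' = 1%:M ->
  dg A B *m UP N *m dg A' B' = UP (A *m N *m B').
Proof.
move=> hA hB; rewrite /dg /UP !mulmx_block.
by rewrite !(mulmx0, mul0mx, mulmx1, mul1mx, addr0, add0r) hA hB.
Qed.

Lemma conjL (A A' B B' N : M) : A *m A' = 1%:M -> B *m B' = 1%:M ->
  dg A B *m LO N *m dg A' B' = LO (B *m N *m A').
Proof.
move=> hA hB; rewrite /dg /LO !mulmx_block.
by rewrite !(mulmx0, mul0mx, mulmx1, mul1mx, addr0, add0r) hA hB.
Qed.

Lemma dgM (A B C D : M) : dg A B *m dg C D = dg (A *m C) (B *m D).
Proof. by rewrite /dg mulmx_block !(mulmx0, mul0mx, addr0, add0r). Qed.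

Lemma dg1 : dg 1%:M 1%:M = 1%:M.
Proof. by rewrite /dg -scalar_mx_block. Qed.

Lemma LOLO (N N' : M) : LO N *m LO N' = LO (N + N').
Proof. by rewrite /LO mulmx_block !(mulmx0, mul0mx, mulmx1, mul1mx, addr0, add0r) addrC. Qed.

Lemma UBU (b c : M) : b *m c *m b = b ->
  UP b *m LO c *m UP b = block_mx (1%:M + b *m c) b c (1%:M + c *m b).
Proof.
move=> h; rewrite /UP /LO !mulmx_block !(mulmx0, mul0mx, mulmx1, mul1mx, addr0, add0r).
by rewrite mulmxDl mul1mx h addF2 add0r [c *m b + _]addrC.
Qed.

Lemma YP (P : M) : P *m P = P ->
  UP P *m LO P *m UP P = transU k *m LO P *m transU k.
Proof.
move=> h; rewrite UBU ?h // /transU /LO !mulmx_block !(mulmx0, mul0mx, mulmx1, mul1mx, addr0, add0r).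
by rewrite [1%:M + P + _]addrC addrA addF2 add0r [P + _]addrC.
Qed.

Lemma conj3 (G G' X1 X2 X3 : 'M['F_2]_(k + k)) : G' *m G = 1%:M ->
  (G *m X1 *m G') *m (G *m X2 *m G') *m (G *m X3 *m G') = G *m (X1 *m X2 *m X3) *m G'.
Proof.
move=> h; rewrite !mulmxA -[G *m X1 *m G' *m G]mulmxA h mulmx1.
by rewrite -[G *m X1 *m X2 *m G' *m G]mulmxA h mulmx1.
Qed.

Lemma conjback (G X : 'M['F_2]_(k + k)) : G *m G = 1%:M -> X = G *m (G *m X *m G) *m G.
Proof. by move=> h; rewrite !mulmxA h mul1mx -mulmxA h mulmx1. Qed.

Lemma inv_sq (N : M) : N *m N = 0 -> (1%:M + N) *m (1%:M + N) = 1%:M.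
Proof.
move=> h; rewrite mulmxDl mul1mx mulmxDr mulmx1 h addr0 -addrA addF2 addr0 //.
Qed.
End B.

Definition mxprod_cat k (s1 s2 : seq 'M['F_2]_(k + k)) :
  mxprod (s1 ++ s2) = mxprod s1 *m mxprod s2.
Proof. by elim: s1 => [|A s1 IH] /=; rewrite ?mul1mx // IH mulmxA. Qed.

Lemma notT k (hk : (0 < k)%N) (A B : 'M['F_2]_k) : transversal_factor (dg A B) = false.
Proof.
have h01 : (0 : 'M['F_2]_k) != 1%:M.
  apply/eqP => /(congr1 (fun M : 'M['F_2]_k => M (Ordinal hk) (Ordinal hk))).
  by rewrite !mxE eqxx /= => /eqP; rewrite eq_sym oner_eq0.
rewrite /transversal_factor /transU /transL /dg.
by apply/norP; split; apply/eqP => /eq_block_mx [_ h2 h3 _]; move/eqP: h01;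
  [rewrite h2 | rewrite h3].
Qed.

Lemma dg_allowed k (A B : 'M['F_2]_k) : A \in unitmx -> B \in unitmx -> allowed_factor (dg A B).
Proof. by move=> hA hB; left; exists A, B. Qed.

Lemma transL_allowed k : allowed_factor (transL k).
Proof. by right; right; rewrite /transversal_factor eqxx orbT. Qed.
Lemma transL_t k : transversal_factor (transL k) = true.
Proof. by rewrite /transversal_factor eqxx orbT. Qed.
Lemma transU_t k : transversal_factor (transU k) = true.
Proof. by rewrite /transversal_factor eqxx. Qed.

Lemma transU_allowed k : allowed_factor (transU k).
Proof. by right; right; rewrite /transversal_factor eqxx. Qed.

Lemma ord_pred_val n (i : 'I_n) :
  (ord_pred i : nat) = if (i : nat) == 0%N then n.-1 else (i : nat).-1.
Proof.
case: i => [m hm] /=; case: eqP => [->|h].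
  by rewrite add0n modn_small // prednK ?(leq_ltn_trans _ hm) // leqnn.
case: m hm h => [|m] hm h //=.
by rewrite modnDr modn_small // ltnW.
Qed.

Lemma Nlow k r (hr : (r < k)%N) (i j : 'I_k) :
  ((ord_pred i : nat) == j) && (ord_pred i < r)%N -> (j < i)%N.
Proof.
move=> /andP[/eqP hj h]; have e := ord_pred_val i.
rewrite -hj; move: h; rewrite e.
case: eqP => [_ h|hi _]; first by move: (leq_ltn_trans h hr); rewrite prednK ?ltnn // (leq_ltn_trans (leq0n r) hr).
by case: (nat_of_ord i) hi => //= m _.
Qed.

Lemma LOdec k r (hk : (0 < k)%N) (hr : (r <= k)%N) :
  exists ms : seq 'M['F_2]_(k + k),
    [/\ (forall A, A \in ms -> allowed_factor A), LO (pid_mx r) = mxprod ms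
      & (count (fun A => transversal_factor A) ms <= 2)%N].
Proof.
case: (ltngtP r k) hr => // [hrk _|-> _]; last first.
  exists [:: transL k]; split.
  - by move=> A; rewrite inE => /eqP ->; exact: transL_allowed.
  - by rewrite pid_mx_1 /= mulmx1.
  - by rewrite /= transL_t.
pose t := perm (@ord_pred_inj k).
pose J : 'M['F_2]_k := perm_mx t^-1.
pose P : 'M['F_2]_k := pid_mx r.
have uJ : J \in unitmx by exact: unitmx_perm.
have eJ : J *m perm_mx t = 1%:M by rewrite -perm_mxM mulVg perm_mx1.
have uN : 1%:M + perm_mx t *m P \in unitmx.
  rewrite unitmxE det_trig; last first.
    apply/is_trig_mxP => i j hij; rewrite -row_permE !mxE permE.
    have -> : (i == j) = false by apply/negbTE; rewrite neq_ltn hij.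
    case H: (_ && _); last by rewrite addr0.
    by move: (Nlow hrk H); rewrite ltnNge ltnW.
  rewrite big1 ?unitr1 // => i _; rewrite -row_permE !mxE permE eqxx.
  case H: (_ && _); last by rewrite addr0.
  by move: (Nlow hrk H); rewrite ltnn.
pose J2 := J + P.
have eJ2 : J2 = J *m (1%:M + perm_mx t *m P) by rewrite mulmxDr mulmx1 mulmxA eJ mul1mx.
have uJ2 : J2 \in unitmx by rewrite eJ2 unitmx_mul uJ uN.
exists [:: dg 1%:M J; transL k; dg 1%:M (invmx J); dg 1%:M J2; transL k; dg 1%:M (invmx J2)].
split.
- move=> A; rewrite !inE.
  have u1 : (1%:M : 'M['F_2]_k) \in unitmx by rewrite unitmx1.
  have h1 : forall B : 'M['F_2]_k, B \in unitmx -> allowed_factor (dg 1%:M B).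
    move=> B hB; left; exists 1%:M, B; split => //.
  move=> /orP[/eqP->|/orP[/eqP->|/orP[/eqP->|/orP[/eqP->|/orP[/eqP->|/eqP->]]]]];
    [apply: h1; exact: uJ | exact: transL_allowed | apply: h1; rewrite unitmx_inv; exact: uJ
    | apply: h1; exact: uJ2 | exact: transL_allowed | apply: h1; rewrite unitmx_inv; exact: uJ2].
- have eT : transL k = LO 1%:M by [].
  rewrite /mxprod /= mulmx1 !mulmxA eT.
  have e1 := @conjL k 1%:M 1%:M J (invmx J) 1%:M (mulmx1 1%:M) (mulmxV uJ).
  have e2 := @conjL k 1%:M 1%:M J2 (invmx J2) 1%:M (mulmx1 1%:M) (mulmxV uJ2).
  rewrite !mulmx1 in e1 e2.
  by rewrite e1 -!mulmxA (mulmxA (dg 1%:M J2)) e2 LOLO /J2 addrA addF2 add0r.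
- by rewrite /= !notT // transL_t.
Qed.

Lemma canc k (L L' R R' X Y : 'M['F_2]_k) : L' *m L = 1%:M -> R *m R' = 1%:M ->
  L *m X *m R = L *m Y *m R -> X = Y.
Proof.
move=> h1 h2 e.
have ex : X = L' *m (L *m X *m R) *m R' by rewrite !mulmxA h1 mul1mx -mulmxA h2 mulmx1.
have ey : Y = L' *m (L *m Y *m R) *m R' by rewrite !mulmxA h1 mul1mx -mulmxA h2 mulmx1.
by rewrite ex ey e.
Qed.

Lemma core k (hk : (0 < k)%N) (b c : 'M['F_2]_k) :
  b *m c *m b = b -> c *m b *m c = c ->
  exists fs : seq 'M['F_2]_(k + k),
    [/\ (forall A, A \in fs -> allowed_factor A),
        block_mx (1%:M + b *m c) b c (1%:M + c *m b) = mxprod fs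
      & (count (fun A => transversal_factor A) fs <= 4)%N].
Proof.
move=> hbcb hcbc.
pose L := col_ebase b; pose R := row_ebase b; pose r := \rank b.
pose P : 'M['F_2]_k := pid_mx r.
have hb : L *m P *m R = b by exact: mulmx_ebase.
have uL : L \in unitmx by exact: col_ebase_unit.
have uR : R \in unitmx by exact: row_ebase_unit.
pose L' := invmx L; pose R' := invmx R.
have hLL' : L *m L' = 1%:M by exact: mulmxV uL.
have hL'L : L' *m L = 1%:M by exact: mulVmx uL.
have hRR' : R *m R' = 1%:M by exact: mulmxV uR.
have hR'R : R' *m R = 1%:M by exact: mulVmx uR.
have hP : P *m P = P by rewrite /P pid_mx_id // rank_leq_col.
pose h := R *m c *m L.
have hPhP : P *m h *m P = P.
  by apply: (canc hL'L hRR'); rewrite hb -hbcb -hb /h !mulmxA.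
have hhPh : h *m P *m h = h.
  have e : c *m L *m P *m R *m c = c by rewrite -hb !mulmxA in hcbc.
  rewrite /h; have -> : R *m c *m L *m P *m (R *m c *m L) = R *m (c *m L *m P *m R *m c) *m L.
    by rewrite !mulmxA.
  by rewrite e.
pose Q : 'M['F_2]_k := 1%:M + P.
have hQP : Q *m P = 0 by rewrite /Q mulmxDl mul1mx hP addF2.
have hPQ : P *m Q = 0 by rewrite /Q mulmxDr mulmx1 hP addF2.
pose A : 'M['F_2]_k := 1%:M + P *m h *m Q.
pose B : 'M['F_2]_k := 1%:M + Q *m h *m P.
have hAA : A *m A = 1%:M.
  apply: inv_sq; have -> : P *m h *m Q *m (P *m h *m Q) = P *m h *m (Q *m P) *m h *m Q by rewrite !mulmxA.
  by rewrite hQP mulmx0 !mul0mx.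
have hBB : B *m B = 1%:M.
  apply: inv_sq; have -> : Q *m h *m P *m (Q *m h *m P) = Q *m h *m (P *m Q) *m h *m P by rewrite !mulmxA.
  by rewrite hPQ mulmx0 !mul0mx.
have uA : A \in unitmx by case: (mulmx1_unit hAA).
have uB : B \in unitmx by case: (mulmx1_unit hBB).
have hAP : A *m P = P by rewrite /A mulmxDl mul1mx -mulmxA hQP mulmx0 addr0.
have hPB : P *m B = P by rewrite /B mulmxDr mulmx1 !mulmxA hPQ !mul0mx addr0.
have hAPB : A *m P *m B = P by rewrite hAP hPB.
have hBh : B *m h = P *m h.
  rewrite /B mulmxDl mul1mx.
  have -> : Q *m h *m P *m h = Q *m (h *m P *m h) by rewrite !mulmxA.
  rewrite hhPh /Q mulmxDl mul1mx.
  by rewrite addrA addF2 add0r.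
have hBhA : B *m h *m A = P.
  rewrite hBh /A mulmxDr mulmx1.
  have -> : P *m h *m (P *m h *m Q) = (P *m h *m P) *m h *m Q by rewrite !mulmxA.
  rewrite hPhP.
  by rewrite /Q mulmxDr mulmx1 addrA addF2 add0r hPhP.
have [ms [hms1 hms2 hms3]] := LOdec hk (rank_leq_col b).
exists ([:: dg L R'; dg A B; transU k] ++ ms ++ [:: transU k; dg A B; dg L' R]).
have uL' : L' \in unitmx by rewrite unitmx_inv.
have uR' : R' \in unitmx by rewrite unitmx_inv.
split.
- move=> X; rewrite !mem_cat => /orP[|/orP[]]; last 1 first.
  + rewrite !inE => /orP[/eqP->|/orP[/eqP->|/eqP->]];
     [exact: transU_allowed | exact: dg_allowed uA uB | exact: dg_allowed uL' uR].
  + rewrite !inE => /orP[/eqP->|/orP[/eqP->|/eqP->]];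
     [exact: dg_allowed uL uR' | exact: dg_allowed uA uB | exact: transU_allowed].
  + exact: hms1.
- rewrite !mxprod_cat -hms2 /mxprod /= !mulmx1 -(UBU hbcb).
  have eU : UP b = dg L R' *m UP P *m dg L' R by rewrite (conjU P hLL' hR'R) hb.
  have eL : LO c = dg L R' *m LO h *m dg L' R.
    rewrite (conjL h hLL' hR'R); congr LO.
    by rewrite /h !mulmxA hR'R mul1mx -mulmxA hLL' mulmx1.
  have hG : dg L' R *m dg L R' = 1%:M by rewrite dgM hL'L hRR' dg1.
  rewrite eU eL (conj3 _ _ _ hG).
  have hG2 : dg A B *m dg A B = 1%:M by rewrite dgM hAA hBB dg1.
  have e1 : dg A B *m (UP P *m LO h *m UP P) *m dg A B = UP P *m LO P *m UP P.
    by rewrite -(conj3 _ _ _ hG2) (conjU P hAA hBB) (conjL h hAA hBB) hAPB hBhA.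
  have eZ := conjback (UP P *m LO h *m UP P) hG2.
  by rewrite eZ e1 (YP hP) !mulmxA.
- rewrite !count_cat /= !notT // !transU_t.
  move: hms3; set m := count _ ms; rewrite !addn0 !add0n => hm.
  by rewrite /= addn1 !ltnS.
Qed.

Section E.
Variable k : nat.
Implicit Types A : 'M['F_2]_(k + k).
Lemma ule A i j : ulsubmx A i j = A (lshift k i) (lshift k j).
Proof. by rewrite /ulsubmx /lsubmx /usubmx !mxE. Qed.
Lemma ure A i j : ursubmx A i j = A (lshift k i) (rshift k j).
Proof. by rewrite /ursubmx /rsubmx /usubmx !mxE. Qed.
Lemma dle A i j : dlsubmx A i j = A (rshift k i) (lshift k j).
Proof. by rewrite /dlsubmx /lsubmx /dsubmx !mxE. Qed.
Lemma dre A i j : drsubmx A i j = A (rshift k i) (rshift k j).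
Proof. by rewrite /drsubmx /rsubmx /dsubmx !mxE. Qed.
End E.

Section P.
Variable k : nat.
Variable s : 'S_(k + k).
Hypothesis hs : cross_involution s.

Lemma Xent i j : (perm_mx s : 'M['F_2]_(k+k)) i j = (s i == j)%:R.
Proof. by rewrite /perm_mx !mxE. Qed.

Lemma XX : (perm_mx s : 'M['F_2]_(k+k)) *m perm_mx s = 1%:M.
Proof.
rewrite -perm_mxM; have -> : (s * s = 1)%g by apply/permP => i; rewrite permM perm1 hs.1.
by rewrite perm_mx1.
Qed.

Let a := ulsubmx (perm_mx s : 'M['F_2]_(k+k)).
Let b := ursubmx (perm_mx s : 'M['F_2]_(k+k)).
Let c := dlsubmx (perm_mx s : 'M['F_2]_(k+k)).
Let d := drsubmx (perm_mx s : 'M['F_2]_(k+k)).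

Lemma a_diag : a = diag_mx (\row_i ((s (lshift k i) == lshift k i)%:R)).
Proof.
apply/matrixP => i j; rewrite /a ule Xent !mxE.
case: (eqVneq i j) => [->|hij]; first by rewrite mulr1n.
rewrite mulr0n; case: eqP => // h; exfalso.
have := hs.2 (lshift k i); rewrite h eq_lshift eq_sym hij => /(_ isT).
by rewrite /= !ltn_ord.
Qed.

Lemma d_diag : d = diag_mx (\row_i ((s (rshift k i) == rshift k i)%:R)).
Proof.
apply/matrixP => i j; rewrite /d dre Xent !mxE.
case: (eqVneq i j) => [->|hij]; first by rewrite mulr1n.
rewrite mulr0n; case: eqP => // h; exfalso.
have := hs.2 (rshift k i); rewrite h eq_rshift eq_sym hij => /(_ isT).
by rewrite /= !ltnNge !leq_addr.
Qed.

Lemma aa : a *m a = a.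
Proof.
rewrite a_diag mul_diag_mx; apply/matrixP => i j; rewrite !mxE.
by case: eqP; case: eqP; rewrite ?mulr0 ?mul0r ?mulr1.
Qed.

Lemma dd : d *m d = d.
Proof.
rewrite d_diag mul_diag_mx; apply/matrixP => i j; rewrite !mxE.
by case: eqP; case: eqP; rewrite ?mulr0 ?mul0r ?mulr1.
Qed.

Lemma ab : a *m b = 0.
Proof.
rewrite a_diag mul_diag_mx; apply/matrixP => i j; rewrite !mxE.
case: eqP => [->|]; last by rewrite mul0r.
by rewrite eq_lrshift mulr0.
Qed.

Lemma ca : c *m a = 0.
Proof.
rewrite a_diag mul_mx_diag; apply/matrixP => i j; rewrite !mxE.
case: eqP => [h|]; last by rewrite mul0r.
case: eqP => [h'|]; last by rewrite mulr0.
by move: h; rewrite -h' => /perm_inj; move/eqP; rewrite eq_rlshift.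
Qed.

Lemma perm_blocks :
  [/\ (perm_mx s : 'M['F_2]_(k+k)) = block_mx (1%:M + b *m c) b c (1%:M + c *m b),
      b *m c *m b = b & c *m b *m c = c].
Proof.
have h := XX; rewrite -[perm_mx s]submxK mulmx_block (scalar_mx_block k k 1) in h.
case/eq_block_mx: h => h1 h2 h3 h4.
rewrite -/a -/b -/c -/d aa in h1; rewrite -/a -/b -/c -/d dd in h4.
rewrite -/a -/b -/c -/d in h2 h3.
have ea : a = 1%:M + b *m c.
  by rewrite -h1 -addrA addF2 addr0.
have ed : d = 1%:M + c *m b.
  by rewrite -h4 [c *m b + d]addrC -addrA addF2 addr0.
have hbc : b *m c = a + 1%:M by rewrite -h1 addrA addF2 add0r.
split.
- by rewrite -[perm_mx s]submxK -/a -/b -/c -/d -ea -ed.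
- by rewrite hbc mulmxDl ab mul1mx add0r.
- by rewrite -mulmxA hbc mulmxDr ca mulmx1 add0r.
Qed.
End P.

Theorem mainTheorem2 (k : nat) (hk : (0 < k)%N) (s : 'S_(k + k))
  (hs : cross_involution s) :
  exists fs : seq 'M['F_2]_(k + k),
    [/\ (forall A, A \in fs -> allowed_factor A),
        perm_mx s = mxprod fs
      & (count (fun A => transversal_factor A) fs <= 4)%N].
Proof.
have [e1 e2 e3] := perm_blocks hs.
have [fs [h1 h2 h3]] := core hk e2 e3.
by exists fs; split => //; rewrite e1 h2.
Qed.
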